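(* Let $N\ge 2$ be an integer and let $f_1,f_2$ be non-negative integers such that the map $f:\{0,1,\ldots,N-1\}\to\{0,1,\ldots,N-1\}$, $f(x)=(f_1x+f_2x^2) \bmod N$, is a permutation of $\{0,1,\ldots,N-1\}$. Then the interleaver $f$ is maximum contention-free.
   Context: An interleaver of length $N$ is a permutation $f$ of $\{0,1,\ldots,N-1\}$; let $g=f^{-1}$ denote its inverse (the deinterleaver). For a positive integer $W$ dividing $N$, put $M=N/W$. The interleaver $f$ is called contention-free for window size $W$ if for both $\pi=f$ and $\pi=g$ we have $\lfloor \pi(j+tW)/W\rfloor \neq \lfloor \pi(j+vW)/W\rfloor$ for all integers $j,t,v$ with $0\le j<W$ and $0\le t<v<M$. The interleaver is called maximum contention-free if it is contention-free for every window size $W$ that is a positive divisor of $N$. Here $a \bmod N$ denotes the representative of $a$ modulo $N$ in $\{0,\ldots,N-1\}$. *)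

(* Defs.v *)
From mathcomp Require Import all_boot.
Set Implicit Arguments. Unset Strict Implicit. Unset Printing Implicit Defensive.

Definition is_perm_on (N : nat) (f : nat -> nat) : Prop :=
  (forall x, x < N -> f x < N) /\
  (forall x y, x < N -> y < N -> f x = f y -> x = y).

Definition is_inverse_on (N : nat) (f g : nat -> nat) : Prop :=
  (forall x, x < N -> g x < N) /\
  (forall x, x < N -> g (f x) = x) /\
  (forall x, x < N -> f (g x) = x).

Definition cf_cond (N W : nat) (pi : nat -> nat) : Prop :=
  forall j t v, j < W -> t < v -> v < N %/ W ->
    pi (j + t * W) %/ W <> pi (j + v * W) %/ W.

Definition contention_free (N W : nat) (f : nat -> nat) : Prop :=
  forall g, is_inverse_on N f g -> cf_cond N W f /\ cf_cond N W g.

Definition max_contention_free (N : nat) (f : nat -> nat) : Prop :=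
  forall W, 0 < W -> W %| N -> contention_free N W f.

Definition qpp (N f1 f2 : nat) (x : nat) : nat := (f1 * x + f2 * x ^ 2) %% N.

(* Main.v *)
Require Import Defs.
From mathcomp Require Import all_boot.
From mathcomp Require Import zify.

Lemma qpp_mod (N f1 f2 W x : nat) : W %| N ->
  qpp N f1 f2 x %% W = qpp N f1 f2 (x %% W) %% W.
Proof.
move=> WN; rewrite /qpp !modn_dvdm //.
have Ex := divn_eq x W.
set q := x %/ W in Ex *; set r := x %% W in Ex *.
rewrite [in LHS]Ex.
have -> : f1 * (q * W + r) + f2 * (q * W + r) ^ 2 =
   (f1 * q + f2 * (q * q * W + 2 * q * r)) * W + (f1 * r + f2 * r ^ 2).
  rewrite !expnS !expn0; nia.
by rewrite modnMDl.
Qed.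

Lemma quot_ne (W a b : nat) : a %% W = b %% W -> a <> b -> a %/ W <> b %/ W.
Proof.
move=> Hm Hab Hq; apply: Hab.
by rewrite (divn_eq a W) (divn_eq b W) Hm Hq.
Qed.

Lemma surj_inj (W : nat) (h : 'I_W -> 'I_W) :
  (forall s, exists i, h i = s) -> injective h.
Proof.
move=> hs.
pose k (s : 'I_W) := odflt s [pick i | h i == s].
have hk : forall s, h (k s) = s.
  move=> s; rewrite /k; case: pickP => [i /eqP //|H].
  by case: (hs s) => i Hi; move: (H i); rewrite Hi eqxx.
have kinj : injective k by move=> a b E; rewrite -(hk a) -(hk b) E.
move=> a b.
have /codomP [a' ->] := injF_onto kinj a.
have /codomP [b' ->] := injF_onto kinj b.
by rewrite !hk => ->.
Qed.

Theorem theorem1 (N f1 f2 : nat) :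
  2 <= N -> is_perm_on N (qpp N f1 f2) ->
  max_contention_free N (qpp N f1 f2).
Proof.
move=> N2 [fN finj] W W0 WN g [gN [gf fg]].
set f := qpp N f1 f2 in fN finj gf fg *.
have WleN : W <= N by apply: dvdn_leq => //; lia.
have Hlt : forall j t, j < W -> t < N %/ W -> j + t * W < N.
  move=> j t jW tM.
  have : t.+1 * W <= N %/ W * W by rewrite leq_mul2r tM orbT.
  rewrite divnK //; rewrite mulSn; lia.
have Hmod : forall j t, (j + t * W) %% W = j %% W.
  by move=> j t; rewrite addnC modnMDl.
split.
- move=> j t v jW tv vM.
  have tM : t < N %/ W by lia.
  apply: quot_ne.
    by rewrite /f (qpp_mod _ _ _ W (j + t * W)) // Hmod (qpp_mod _ _ _ W (j + v * W)) // Hmod.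
  move=> E; have := finj _ _ (Hlt _ _ jW tM) (Hlt _ _ jW vM) E.
  have : t * W < v * W by rewrite ltn_pmul2r.
  lia.
- move=> j t v jW tv vM.
  have tM : t < N %/ W by lia.
  have ltW : forall y, y %% W < W by move=> y; rewrite ltn_pmod.
  pose h (i : 'I_W) : 'I_W := Ordinal (ltW (f i)).
  have hinj : injective h.
    apply: surj_inj => s.
    have sN : s < N by apply: leq_trans WleN.
    exists (Ordinal (ltW (g s))); apply: val_inj => /=.
    by rewrite /f -qpp_mod // -/f fg // modn_small.
  set x := g (j + t * W); set y := g (j + v * W).
  have xN : x < N by apply: gN; apply: Hlt.
  have yN : y < N by apply: gN; apply: Hlt.
  apply: quot_ne.
    have : h (Ordinal (ltW x)) = h (Ordinal (ltW y)).
      apply: val_inj => /=.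
      rewrite /f -!qpp_mod // -/f /x /y !fg ?Hlt // !Hmod //.
    by move/hinj => [].
  move=> E.
  have := f_equal f E; rewrite /x /y !fg ?Hlt //.
  have : t * W < v * W by rewrite ltn_pmul2r.
  lia.
Qed.
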